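(* Let $P\subseteq\{3,4,5,\ldots,\infty\}$. For all $A,B\in\mathcal{F}_P$ (when $\infty\in P$), respectively all $A,B\in\mathcal{G}_P$ (when $\infty\notin P$), there exists $C$ in the same family together with epimorphisms $f_1\colon C\to A$ and $f_2\colon C\to B$ belonging to that family.
   Context: Graphs are finite with reflexive symmetric edge relations. An epimorphism $f\colon B\to A$ is a surjection such that $\langle a_1,a_2\rangle$ is an edge of $A$ iff there are $b_i\in f^{-1}(a_i)$ forming an edge of $B$. It is monotone if every fibre $f^{-1}(a)$ induces a connected subgraph. A finite tree is a finite connected graph without cycles of nontrivial edges; $\mathrm{ord}(a)$ is the number of neighbours of $a$ other than $a$, equivalently the number of components of $A\setminus\{a\}$. For a monotone epimorphism $f\colon B\to A$ of finite trees and $a\in A$ with $\mathrm{ord}(a)=n\ge 3$, with $A_0,\dots,A_{n-1}$ the components of $A\setminus\{a\}$: $a$ is a point of weak coherence of $f$ (witnessed by $b$) if there is $b\in f^{-1}(a)$ with $m=\mathrm{ord}(b)\ge n$ and an injection $p\colon n\to m$ such that $f^{-1}(A_i)\subseteq B_{p(i)}$ for all $i$, where $B_0,\dots,B_{m-1}$ are the components of $B\setminus\{b\}$; it is a point of coherence if moreover $m=n$ and $p$ is a bijection. $f$ is coherent if every $a$ with $\mathrm{ord}(a)\ge3$ is a point of coherence. If $\infty\in P$, $\mathcal{F}_P$ consists of the finite trees with no vertex of order $2$, with epimorphisms $f\colon B\to A$ that are monotone, coherent at each $a$ with $\mathrm{ord}(a)\in P$, and, at each $a$ with $\mathrm{ord}(a)\ge3$,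 $\mathrm{ord}(a)\notin P$, weakly coherent with a witness $b$ satisfying $\mathrm{ord}(b)\notin P$. If $\infty\notin P$, $\mathcal{G}_P$ consists of the finite trees each of whose vertices is an endpoint (order at most $1$) or has order in $P$, with the monotone coherent epimorphisms. *)

(* Defs.v *)
From mathcomp Require Import all_boot.
Set Implicit Arguments. Unset Strict Implicit. Unset Printing Implicit Defensive.

Definition is_graph (T : finType) (e : rel T) : Prop :=
  reflexive e /\ symmetric e.

Definition ord (T : finType) (e : rel T) (a : T) : nat :=
  #|[set b | e a b & b != a]|.

Definition induced (T : finType) (e : rel T) (S : {set T}) : rel T :=
  fun x y => [&& x \in S, y \in S & e x y].

Definition connected_set (T : finType) (e : rel T) (S : {set T}) : Prop :=
  forall x y, x \in S -> y \in S -> connect (induced e S) x y.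

Definition is_tree (T : finType) (e : rel T) : Prop :=
  [/\ is_graph e, 0 < #|T|, connected_set e [set: T] &
      ~ exists s : seq T, [/\ uniq s, 2 < size s & cycle e s]].

Definition is_epi (TB TA : finType) (eB : rel TB) (eA : rel TA) (f : TB -> TA) : Prop :=
  (forall a, exists b, f b = a) /\
  (forall a1 a2, eA a1 a2 <-> exists b1 b2, [/\ f b1 = a1, f b2 = a2 & eB b1 b2]).

Definition monotone (TB TA : finType) (eB : rel TB) (f : TB -> TA) : Prop :=
  forall a, connected_set eB (f @^-1: [set a]).

Definition comps (T : finType) (e : rel T) (a : T) : {set {set T}} :=
  [set [set y | connect (induced e [set~ a]) x y] | x in [set~ a]].

Definition wcoh_witness (TB TA : finType) (eB : rel TB) (eA : rel TA)
    (f : TB -> TA) (a : TA) (b : TB) : Prop :=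
  [/\ f b = a, ord eA a <= ord eB b &
      exists p : {set TA} -> {set TB},
        [/\ {in comps eA a &, injective p},
            forall Ai, Ai \in comps eA a -> p Ai \in comps eB b &
            forall Ai, Ai \in comps eA a -> f @^-1: Ai \subset p Ai]].

Definition coh_witness (TB TA : finType) (eB : rel TB) (eA : rel TA)
    (f : TB -> TA) (a : TA) (b : TB) : Prop :=
  [/\ f b = a, ord eA a = ord eB b &
      exists p : {set TA} -> {set TB},
        [/\ {in comps eA a &, injective p},
            p @: comps eA a = comps eB b &
            forall Ai, Ai \in comps eA a -> f @^-1: Ai \subset p Ai]].

Definition weak_coh_point (TB TA : finType) (eB : rel TB) (eA : rel TA)
    (f : TB -> TA) (a : TA) : Prop :=
  3 <= ord eA a /\ exists b, wcoh_witness eB eA f a b.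

Definition coh_point (TB TA : finType) (eB : rel TB) (eA : rel TA)
    (f : TB -> TA) (a : TA) : Prop :=
  3 <= ord eA a /\ exists b, coh_witness eB eA f a b.

(* P ⊆ {3,4,5,...,∞} is encoded as [P : nat -> Prop] (its finite part,
   with P n -> 3 <= n) together with [infP : bool] (whether ∞ ∈ P). *)

(* Objects of F_P (infP = true) / G_P (infP = false). *)
Definition fam_obj (infP : bool) (P : nat -> Prop) (T : finType) (e : rel T) : Prop :=
  is_tree e /\
  (if infP then forall a, ord e a <> 2
   else forall a, ord e a <= 1 \/ P (ord e a)).

(* Morphisms of F_P (infP = true) / G_P (infP = false). *)
Definition fam_mor (infP : bool) (P : nat -> Prop) (TB TA : finType)
    (eB : rel TB) (eA : rel TA) (f : TB -> TA) : Prop :=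
  is_epi eB eA f /\ monotone eB f /\
  (if infP then
     (forall a, 3 <= ord eA a -> P (ord eA a) -> coh_point eB eA f a) /\
     (forall a, 3 <= ord eA a -> ~ P (ord eA a) ->
        exists b, wcoh_witness eB eA f a b /\ ~ P (ord eB b))
   else forall a, 3 <= ord eA a -> coh_point eB eA f a).

(* Main.v *)
Require Import Defs.
From mathcomp Require Import all_boot.
Set Implicit Arguments. Unset Strict Implicit. Unset Printing Implicit Defensive.

Lemma connect_hom (T T' : finType) (r : rel T) (r' : rel T') (g : T -> T') :
  (forall x y, r x y -> r' (g x) (g y)) ->
  forall x y, connect r x y -> connect r' (g x) (g y).
Proof.
move=> H x y /connectP [p pp ->]; apply/connectP; exists (map g p); last by rewrite last_map.
elim: p x pp => //= z p IH x /andP [rxz pz]; by rewrite (H _ _ rxz) IH.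
Qed.

Lemma path_induced_last (T : finType) (e : rel T) (S : {set T}) u p :
  path (induced e S) u p -> p != [::] -> last u p \in S.
Proof.
elim: p u => //= y p IH u /andP [/and3P [_ yS _] pp] _.
case: p IH pp => [|z p] IH pp; first by [].
by apply: IH.
Qed.

Lemma connect_induced_mem (T : finType) (e : rel T) (S : {set T}) u w :
  connect (induced e S) u w -> u != w -> w \in S.
Proof.
move=> /connectP [p pp ->]; case: p pp => [|y p] pp; first by rewrite eqxx.
move=> _; exact: path_induced_last pp _.
Qed.

Lemma induced_sym (T : finType) (e : rel T) S : symmetric e -> symmetric (induced e S).
Proof. by move=> se x y; rewrite /induced se andbCA. Qed.

Lemma first_step (T : finType) (e : rel T) u w :
  connect e u w -> u != w -> exists y, e u y /\ y != u.
Proof.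
move=> /connectP [p pp ->]; elim: p u pp => [|y p IH] u /=; first by rewrite eqxx.
case/andP => euy pp nl; case: (eqVneq y u) => [yu|yu]; last by exists y.
by subst y; apply: IH.
Qed.

Lemma tree_conn (T : finType) (e : rel T) : is_tree e -> forall x y, connect e x y.
Proof.
case=> _ _ c _ x y; have := c x y (in_setT _) (in_setT _).
by apply: (@connect_hom _ _ _ _ id) => a b /and3P [_ _ ->].
Qed.

Lemma leaf_nb (T : finType) (e : rel T) x0 x1 :
  [set y | e x0 y & y != x0] = [set x1] -> forall y, e x0 y -> y != x0 -> y = x1.
Proof. by move=> E y h1 h2; apply/set1P; rewrite -E inE h1 h2. Qed.

Lemma leaf_ne (T : finType) (e : rel T) x0 x1 :
  [set y | e x0 y & y != x0] = [set x1] -> e x0 x1 /\ x1 != x0.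
Proof. by move=> E; have := set11 x1; rewrite -E inE => /andP. Qed.

Lemma leaf_remove (T : finType) (e : rel T) x0 x1 : symmetric e ->
  [set y | e x0 y & y != x0] = [set x1] ->
  forall u v, connect e u v -> u != x0 -> v != x0 ->
  connect (induced e [set~ x0]) u v.
Proof.
move=> se E u v /connectP [p pp ->] ux0 vx0.
suff: connect (induced e [set~ x0]) u (if last u p == x0 then x1 else last u p).
  by rewrite (negbTE vx0).
elim/last_ind: p pp {vx0} => [|p z IH] /=; first by rewrite (negbTE ux0) connect0.
rewrite rcons_path last_rcons => /andP [pp ez]; move: (IH pp).
case: (eqVneq (last u p) x0) => [lx|lx]; case: (eqVneq z x0) => [zx|zx] //.
- by rewrite lx in ez; rewrite (leaf_nb E ez zx).
- by rewrite zx se in ez; rewrite (leaf_nb E ez lx).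
- move=> h; apply: connect_trans h (connect1 _).
  by rewrite /induced !in_setC1 lx zx ez.
Qed.

Lemma cyc_split (T : finType) (e : rel T) (q : seq T) y :
  ~ (exists s : seq T, [/\ uniq s, 2 < size s & cycle e s]) ->
  sorted e q -> uniq q -> y \in q -> e (last y q) y -> y != last y q ->
  index y q = (size q).-2.
Proof.
move=> nc sq uq yq; case/splitPr: yq sq uq => p1 p2 sq uq.
rewrite last_cat /= => el nl.
have sp2 : path e y p2.
  case: p1 sq {uq} => [|z p1] /=; first by [].
  by rewrite cat_path => /andP [_] /= /andP [].
move: uq; rewrite cat_uniq => /and3P [_ hp uq2].
have yp1 : y \notin p1 by move: hp; apply: contra => yp; apply/hasP; exists y => //; rewrite inE eqxx.
have sz : size p2 = 1.
  clear sq hp; case: p2 sp2 el nl uq2 => [|z [|w p2]] //=; first by rewrite eqxx.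
  move=> sp el nl uq2; exfalso; apply: nc; exists [:: y, z, w & p2]; split => //.
  by rewrite /cycle rcons_path; apply/andP; split.
by rewrite index_cat (negbTE yp1) /= eqxx size_cat /= sz addn0 addn2.
Qed.
Lemma leaf_exists (T : finType) (e : rel T) : is_tree e -> 1 < #|T| ->
  exists a0 a1, [set b | e a0 b & b != a0] = [set a1].
Proof.
move=> tT h1; have [[_ se] _ _ nc] := tT; have cn := tree_conn tT.
pose Pn n := [exists x : T, exists t : n.-tuple T, uniq (x :: t) && path e x t].
have ub : forall n, Pn n -> n <= #|T|.
  move=> n /existsP [x /existsP [t /andP [u _]]].
  have := max_card (mem (x :: t)); rewrite (card_uniqP u) /= size_tuple; exact: ltnW.
move/card_gt1P: h1 => [u1 [u2 [_ _ u12]]].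
have P1 : Pn 1.
  have [y [euy yu]] := first_step (cn u1 u2) u12.
  apply/existsP; exists u1; apply/existsP; exists [tuple y].
  by rewrite /= inE eq_sym yu euy.
case: (ex_maxnP (ex_intro _ 1 P1) ub) => n /existsP [x /existsP [t /andP [ut pt]]] mx.
have n1 := mx _ P1.
set s := tval t in ut pt; have sz : size s = n by rewrite size_tuple.
set v := last x s.
have ext : forall y, e v y -> y != v -> y \in x :: s.
  move=> y ev yv; apply/negPn/negP => yn.
  have : Pn n.+1.
    apply/existsP; exists x; apply/existsP.
    have szr : size (rcons s y) == n.+1 by rewrite size_rcons sz.
    exists (Tuple szr) => /=.
    change (uniq (rcons (x :: s) y) && path e x (rcons s y)).
    by rewrite rcons_uniq yn ut rcons_path pt ev.
  by move/mx; rewrite ltnn.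
have idx : forall y, e v y -> y != v -> index y (x :: s) = n.-1.
  move=> y ev yv; have := cyc_split nc (q := x :: s) pt ut (ext y ev yv) ev yv.
  by rewrite /= sz.
have [z zv] : exists z, z != v.
  case: (eqVneq u1 v) => [h|h]; last by exists u1.
  by exists u2; rewrite -h eq_sym.
have vz : v != z by rewrite eq_sym.
have [w0 [ew0 w0v]] := first_step (cn v z) vz.
exists v, w0; apply/setP => y; rewrite !inE; apply/andP/eqP => [[ey yv]|->] //.
rewrite -(nth_index x (ext y ey yv)) -(nth_index x (ext w0 ew0 w0v)).
by rewrite (idx y ey yv) (idx w0 ew0 w0v).
Qed.

Lemma path_side (T : finType) (e : rel T) v (side : T -> bool) :
  (forall c c', c != v -> c' != v -> e c c' -> side c = side c') ->
  forall p y, path e y p -> y != v -> v \notin p -> all (fun z => side z == side y) p.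
Proof.
move=> H; elim=> [|z p IH] y //= /andP [eyz pp] yv; rewrite inE negb_or => /andP [vz vp].
have zv : z != v by rewrite eq_sym.
have szy := H _ _ yv zv eyz.
rewrite szy eqxx /=; exact: IH z pp zv vp.
Qed.

Lemma cycle_side (T : finType) (e : rel T) v (side : T -> bool) :
  (forall c c', c != v -> c' != v -> e c c' -> side c = side c') ->
  forall s, uniq s -> cycle e s ->
  (forall z, z \in s -> z != v -> side z) \/ (forall z, z \in s -> z != v -> ~~ side z).
Proof.
move=> H s us cs.
suff : (forall z, z \in s -> z = v) \/ exists y p, [/\ (forall z, z \in s -> z != v -> z \in y :: p),
    path e y p, y != v & v \notin p].
  case=> [hv|[y [p [hm pp yv vp]]]].
    by left => z /hv ->; rewrite eqxx.
  have al := path_side H pp yv vp.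
  have sz : forall z, z \in s -> z != v -> side z = side y.
    move=> z zs zv; move: (hm z zs zv); rewrite inE => /orP [/eqP -> //|zp].
    by apply/eqP; move/allP: al; apply.
  case sy: (side y); [left|right] => z zs zv; by rewrite (sz z zs zv) sy.
case: (boolP (v \in s)) => vs.
  case: (rot_to vs) => k s' E.
  have cs' : cycle e (v :: s') by rewrite -E rot_cycle.
  have us' : uniq (v :: s') by rewrite -E rot_uniq.
  case: s' E cs' us' => [|y p] E cs' us'.
    by left => z; rewrite -(mem_rot k) E inE => /eqP ->.
  right; exists y, p; move: cs' us'; rewrite /cycle rcons_path /= => /andP [/andP [_ pp] _].
  rewrite !inE negb_or => /andP [/andP [vy vp] _]; split => //; last by rewrite eq_sym.
  - move=> z; rewrite -(mem_rot k) E inE => /orP [/eqP -> |]; first by rewrite eqxx.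
    by [].
case: s us cs vs => [|y p] us cs vs; first by left.
right; exists y, p; split => //.
- by move: cs; rewrite /cycle rcons_path => /andP [].
- by move: vs; rewrite inE negb_or eq_sym => /andP [].
- by move: vs; rewrite inE negb_or => /andP [].
Qed.

Lemma map_preim (T T' : finType) (g : T' -> T) (s : seq T) :
  (forall z, z \in s -> exists y, z = g y) -> exists s', s = map g s'.
Proof.
elim: s => [|z s IH] H; first by exists [::].
have [y ->] := H z (mem_head _ _).
have [s' ->] := IH (fun w ws => H w (mem_behead (s := z :: s) ws)).
by exists (y :: s').
Qed.

Lemma cycle_pull (T T' : finType) (e : rel T) (e' : rel T') (g : T' -> T) :
  injective g -> (forall y y', e (g y) (g y') -> e' y y') ->
  forall s, (forall z, z \in s -> exists y, z = g y) ->
  uniq s -> 2 < size s -> cycle e s ->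
  exists s' : seq T', [/\ uniq s', 2 < size s' & cycle e' s'].
Proof.
move=> gi gr s hs; have [s' ->] := map_preim hs.
rewrite (map_inj_uniq gi) size_map => us sz cs; exists s'; split => //.
case: s' us sz cs => [|y p] //= _ _.
rewrite -map_rcons; move: (rcons p y) => q.
elim: q y => [|z q IH] y //= /andP [h1 h2]; by rewrite (gr _ _ h1) IH.
Qed.
Section Glue.
#[local] Set Default Proof Using "All".
Variables (TA TX TC : finType) (eA : rel TA) (eX : rel TX) (eC : rel TC).
Variables (i : TA -> TC) (j : TX -> TC) (f : TC -> TA) (a0 a1 : TA) (x0 x1 : TX).
Hypotheses (tA : is_tree eA) (tX : is_tree eX)
  (NA : [set b | eA a0 b & b != a0] = [set a1])
  (NX : [set y | eX x0 y & y != x0] = [set x1])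
  (iI : injective i) (jI : injective j) (ia0 : i a0 = j x1) (ia1 : i a1 = j x0)
  (ij : forall a x, i a = j x -> (a = a0 /\ x = x1) \/ (a = a1 /\ x = x0))
  (cov : forall c, (exists a, c = i a) \/ (exists x, c = j x))
  (eCE : forall c c', eC c c' <->
     (exists a a', [/\ c = i a, c' = i a' & eA a a']) \/
     (exists x x', [/\ c = j x, c' = j x' & eX x x']))
  (fi : forall a, f (i a) = a) (fj : forall x, x != x0 -> f (j x) = a0).

Lemma symA : symmetric eA. Proof. by case: tA => [[]]. Qed.
Lemma symX : symmetric eX. Proof. by case: tX => [[]]. Qed.
Lemma reflA : reflexive eA. Proof. by case: tA => [[]]. Qed.
Lemma reflX : reflexive eX. Proof. by case: tX => [[]]. Qed.

Lemma pairA a a' : a \in [:: a0; a1] -> a' \in [:: a0; a1] -> eA a a'.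
Proof.
have [e01 _] := leaf_ne NA.
rewrite !inE => /orP [] /eqP -> /orP [] /eqP ->; rewrite ?reflA //; by rewrite symA.
Qed.

Lemma pairX x x' : x \in [:: x0; x1] -> x' \in [:: x0; x1] -> eX x x'.
Proof.
have [e01 _] := leaf_ne NX.
rewrite !inE => /orP [] /eqP -> /orP [] /eqP ->; rewrite ?reflX //; by rewrite symX.
Qed.

Lemma ijm a x : i a = j x -> a \in [:: a0; a1] /\ x \in [:: x0; x1].
Proof. by case/ij => [[-> ->]|[-> ->]]; rewrite !inE !eqxx ?orbT. Qed.

Lemma i_hom a a' : eA a a' -> eC (i a) (i a').
Proof. by move=> h; apply/eCE; left; exists a, a'. Qed.
Lemma j_hom x x' : eX x x' -> eC (j x) (j x').
Proof. by move=> h; apply/eCE; right; exists x, x'. Qed.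

Lemma i_refl a a' : eC (i a) (i a') -> eA a a'.
Proof.
case/eCE => [[b [b' [/iI <- /iI <- //]]]|[x [x' [h h' _]]]].
by apply: pairA; [case: (ijm h) | case: (ijm h')].
Qed.

Lemma j_refl x x' : eC (j x) (j x') -> eX x x'.
Proof.
case/eCE => [[b [b' [h h' _]]]|[y [y' [/jI <- /jI <- //]]]].
by apply: pairX; [case: (ijm (esym h)) | case: (ijm (esym h'))].
Qed.

Lemma fjp x : f (j x) \in [:: a0; a1].
Proof.
case: (eqVneq x x0) => [->|h]; first by rewrite -ia1 fi !inE eqxx orbT.
by rewrite fj // inE eqxx.
Qed.

Lemma f_hom c c' : eC c c' -> eA (f c) (f c').
Proof.
case/eCE => [[b [b' [-> -> h]]]|[y [y' [-> -> _]]]]; first by rewrite !fi.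
by apply: pairA; apply: fjp.
Qed.

Lemma reflC : reflexive eC.
Proof. move=> c; case: (cov c) => [[a ->]|[x ->]]; [apply: i_hom; apply: reflA | apply: j_hom; apply: reflX]. Qed.

Lemma symC : symmetric eC.
Proof.
suff H : forall c c', eC c c' -> eC c' c by move=> c c'; apply/idP/idP; apply: H.
move=> c c' /eCE [[b [b' [-> -> h]]]|[y [y' [-> -> h]]]].
  by apply: i_hom; rewrite symA.
by apply: j_hom; rewrite symX.
Qed.

Lemma a0_ord : ord eA a0 = 1.
Proof. by rewrite /ord NA cards1. Qed.

Lemma ord_i a : a != a0 -> ord eC (i a) = ord eA a.
Proof.
move=> aa0; rewrite /ord.
suff -> : [set c | eC (i a) c & c != i a] = i @: [set b | eA a b & b != a].
  by rewrite card_imset.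
apply/setP => c; rewrite inE; apply/andP/imsetP.
- case=> /eCE [[b [b' [/iI <- -> h]]]|[x [x' [h -> h']]]] nc.
    by exists b' => //; rewrite inE h; apply: contra nc => /eqP ->.
  case: (ij h) => [[ea _]|[ea ex]]; first by rewrite ea eqxx in aa0.
  subst a x; have [e01 a10] := leaf_ne NA.
  have x'0 : x' != x0 by apply: contra nc => /eqP ->; rewrite ia1.
  rewrite (leaf_nb NX h' x'0) -ia0; exists a0 => //.
  by rewrite inE symA e01 eq_sym a10.
- case=> b; rewrite inE => /andP [h nb] ->; rewrite i_hom //=.
  by rewrite (inj_eq iI).
Qed.

Lemma tree_C : is_tree eC.
Proof.
have [_ _ _ ncA] := tA; have [_ _ _ ncX] := tX.
split.
- split; [exact: reflC | exact: symC].
- by apply/card_gt0P; exists (i a0).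
- have cv : forall c, connect eC c (i a0).
    move=> c; case: (cov c) => [[a ->]|[x ->]].
      by apply: (connect_hom i_hom); apply: tree_conn.
    by rewrite ia0; apply: (connect_hom j_hom); apply: tree_conn.
  move=> c c' _ _.
  have : connect eC c c' by apply: connect_trans (cv c) _; rewrite (sym_connect_sym symC).
  by apply: (@connect_hom _ _ _ _ id) => x y h; rewrite /induced !in_setT.
- case=> s [us sz cs].
  pose side c := [forall a, c != i a].
  have sideJ : forall x, x != x1 -> side (j x) = (x != x0).
    move=> x xx1; case: (eqVneq x x0) => [->|xx0].
      by apply/forallP => /(_ a1); rewrite ia1 eqxx.
    apply/forallP => a; apply/eqP => /esym /ij [[_ h]|[_ h]].
      by rewrite h eqxx in xx1.
    by rewrite h eqxx in xx0.
  have Hs : forall c c', c != i a0 -> c' != i a0 -> eC c c' -> side c = side c'.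
    move=> c c' nc nc' /eCE [[b [b' [ec ec' _]]]|[y [y' [ec ec' h]]]]; subst c c'.
      have H : forall b, side (i b) = false by move=> b0; apply/forallP => /(_ b0); rewrite eqxx.
      by rewrite !H.
    rewrite ia0 !(inj_eq jI) in nc nc'.
    rewrite sideJ // sideJ //.
    case: (eqVneq y x0) => [hy|hy]; case: (eqVneq y' x0) => [hy'|hy'] //.
      by rewrite hy in h; rewrite (leaf_nb NX h hy') eqxx in nc'.
    by rewrite hy' symX in h; rewrite (leaf_nb NX h hy) eqxx in nc.
  case: (cycle_side Hs us cs) => H.
    apply: ncX; apply: (cycle_pull jI j_refl _ us sz cs) => z zs.
    case: (eqVneq z (i a0)) => [->|zn]; first by exists x1.
    have := H z zs zn; case: (cov z) => [[a ->]|[x ->]]; last by exists x.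
    by move/forallP => /(_ a); rewrite eqxx.
  apply: ncA; apply: (cycle_pull iI i_refl _ us sz cs) => z zs.
  case: (eqVneq z (i a0)) => [->|zn]; first by exists a0.
  have := H z zs zn; rewrite negb_forall => /existsP [a]; rewrite negbK => /eqP ->.
  by exists a.
Qed.

Lemma fiber1 a c : a != a0 -> f c = a -> c = i a.
Proof.
move=> aa0; case: (cov c) => [[b ->]|[x ->]]; first by rewrite fi => ->.
case: (eqVneq x x0) => [->|xx0]; first by rewrite -ia1 fi => ->.
by rewrite fj // => h; rewrite h eqxx in aa0.
Qed.

Lemma mono_C : monotone eC f.
Proof.
move=> a c c'; case: (eqVneq a a0) => [->|aa0]; last first.
  by rewrite !inE => /eqP /(fiber1 aa0) -> /eqP /(fiber1 aa0) ->; apply: connect0.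
have fib : forall c, c \in f @^-1: [set a0] -> exists2 x, x != x0 & c = j x.
  move=> z; rewrite !inE => /eqP; case: (cov z) => [[b ->]|[x ->]].
    rewrite fi => ->; exists x1; last by [].
    by have [_ ] := leaf_ne NX.
  case: (eqVneq x x0) => [->|xx0]; last by exists x.
  by rewrite -ia1 fi => h; have [_] := leaf_ne NA; rewrite h eqxx.
move=> /fib [x xx0 ->] /fib [x' xx0' ->].
have := leaf_remove symX NX (tree_conn tX x x') xx0 xx0'.
apply: connect_hom => y y' /and3P [hy hy' h].
rewrite /induced !inE in hy hy' *; by rewrite !fj // eqxx j_hom.
Qed.

Section Coh.
Variable a : TA.
Hypothesis h3 : 3 <= ord eA a.

Lemma aa0 : a != a0.
Proof. by apply: contraTneq h3 => ->; rewrite a0_ord. Qed.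

Let RA := induced eA [set~ a].
Let RC := induced eC [set~ i a].

Lemma nfa c : c != i a -> f c != a.
Proof. by apply: contra => /eqP /(fiber1 aa0) ->. Qed.

Lemma S1 c : c != i a -> connect RC c (i (f c)).
Proof.
case: (cov c) => [[b ->]|[x ->]] nc; first by rewrite fi connect0.
case: (eqVneq x x0) => [ex|xx0]; first by rewrite ex -ia1 fi connect0.
rewrite fj // ia0.
have [_ x10] := leaf_ne NX.
have := leaf_remove symX NX (tree_conn tX x x1) xx0 x10.
apply: connect_hom => y y' /and3P [hy hy' h].
rewrite /RC /induced !inE in hy hy' *; rewrite j_hom // andbT.
have H : forall z, z != x0 -> j z != i a.
  move=> z zx0; apply/eqP => /esym /ij [[ea _]|[_ ez]].
    by have := aa0; rewrite ea eqxx.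
  by rewrite ez eqxx in zx0.
by rewrite !H.
Qed.

Lemma K c c' : c != i a -> connect RC c c' = connect RA (f c) (f c').
Proof.
move=> nc; apply/idP/idP.
  apply: connect_hom => y y' /and3P [hy hy' h].
  by rewrite /RA /induced !in_setC1 !nfa -?in_setC1 // f_hom.
move=> H.
have nc' : c' != i a.
  apply/eqP => ec; rewrite ec fi in H.
  by have := connect_induced_mem H (nfa nc); rewrite in_setC1 eqxx.
apply: connect_trans (S1 nc) _.
apply: connect_trans (_ : connect RC (i (f c)) (i (f c'))) _.
  apply: connect_hom H => y y' /and3P [hy hy' h].
  by rewrite /RC /induced !in_setC1 !(inj_eq iI) -!in_setC1 hy hy' i_hom.
by rewrite (sym_connect_sym (induced_sym _ symC)); apply: S1.
Qed.

Lemma comps_eq : (fun S : {set TA} => f @^-1: S) @: comps eA a = comps eC (i a).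
Proof.
apply/setP => Z; apply/imsetP/imsetP.
- case=> S /imsetP [y yin ->] ->.
  have iy : i y \in [set~ i a] by rewrite in_setC1 (inj_eq iI) -in_setC1.
  exists (i y) => //; apply/setP => c; rewrite !inE K ?fi //.
  by rewrite -in_setC1.
- case=> c cin ->.
  have nc : c != i a by rewrite -in_setC1.
  exists [set z | connect RA (f c) z].
    by apply/imsetP; exists (f c) => //; rewrite in_setC1 nfa.
  by apply/setP => c'; rewrite !inE K.
Qed.

Lemma coh_w : coh_witness eC eA f a (i a).
Proof.
split; first exact: fi.
- by rewrite ord_i // aa0.
exists (fun S : {set TA} => f @^-1: S); split.
- move=> S1' S2' _ _ E; apply/setP => y.
  by have := congr1 (fun Z : {set TC} => i y \in Z) E; rewrite /= !inE fi.
- exact: comps_eq.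
- by move=> Ai _; apply: subxx.
Qed.

Lemma wcoh_w : wcoh_witness eC eA f a (i a).
Proof.
case: coh_w => h1 h2 [p [pI pE ps]]; split => //; first by rewrite h2.
exists p; split => // Ai Ain; rewrite -pE; exact: imset_f.
Qed.

End Coh.

Lemma glue_mor infP (P : nat -> Prop) : fam_mor infP P eC eA f.
Proof.
split; [split|split; [exact: mono_C|]].
- by move=> a; exists (i a).
- move=> b1 b2; split => [h|[c1 [c2 [<- <- h]]]]; last exact: f_hom.
  by exists (i b1), (i b2); rewrite !fi i_hom.
case: infP; last by move=> a h; split => //; exists (i a); apply: coh_w.
split; first by move=> a h _; split => //; exists (i a); apply: coh_w.
move=> a h nP; exists (i a); split; first exact: wcoh_w.
by rewrite ord_i // aa0.
Qed.

End Glue.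

Section Concrete.
#[local] Set Default Proof Using "All".
Variables (TA TB : finType) (eA : rel TA) (eB : rel TB) (a0 a1 : TA) (b0 b1 : TB).
Hypotheses (tA : is_tree eA) (tB : is_tree eB)
  (NA : [set b | eA a0 b & b != a0] = [set a1])
  (NB : [set y | eB b0 y & y != b0] = [set b1]).

Definition keepB (b : TB) := (b != b0) && (b != b1).
Definition TCc : finType := (TA + {b : TB | keepB b})%type.
Definition iC (a : TA) : TCc := inl a.
Definition jC (b : TB) : TCc :=
  match @insub _ keepB {b : TB | keepB b} b with
  | Some s => inr s | None => if b == b0 then inl a1 else inl a0 end.
Definition eCc : rel TCc := fun c c' =>
  [exists a : TA, exists a' : TA, [&& c == iC a, c' == iC a' & eA a a']] ||
  [exists b : TB, exists b' : TB, [&& c == jC b, c' == jC b' & eB b b']].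
Definition fC (c : TCc) : TA := match c with inl a => a | inr _ => a0 end.
Definition gC (c : TCc) : TB := match c with inl a => if a == a0 then b1 else b0 | inr s => val s end.

Lemma a10 : a1 != a0. Proof. exact: (leaf_ne NA).2. Qed.
Lemma b10 : b1 != b0. Proof. exact: (leaf_ne NB).2. Qed.

Lemma jC_b0 : jC b0 = inl a1.
Proof. by rewrite /jC insubF // /keepB eqxx. Qed.
Lemma jC_b1 : jC b1 = inl a0.
Proof. by rewrite /jC insubF ?/keepB ?eqxx ?andbF // (negbTE b10). Qed.
Lemma jC_keep b (kb : keepB b) : jC b = inr (Sub b kb).
Proof. by rewrite /jC insubT. Qed.

Lemma bcases b : [\/ b = b0, b = b1 | keepB b].
Proof.
case: (eqVneq b b0) => [->|h0]; first by constructor 1.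
case: (eqVneq b b1) => [->|h1]; first by constructor 2.
by constructor 3; rewrite /keepB h0 h1.
Qed.

Lemma gjK : cancel jC gC.
Proof.
move=> b; case: (bcases b) => [->|->|kb].
- by rewrite jC_b0 /= (negbTE a10).
- by rewrite jC_b1 /= eqxx.
- by rewrite jC_keep.
Qed.

Lemma fiK : cancel iC fC. Proof. by []. Qed.
Lemma jIc : injective jC. Proof. exact: can_inj gjK. Qed.
Lemma iIc : injective iC. Proof. exact: can_inj fiK. Qed.
Lemma ia0c : iC a0 = jC b1. Proof. by rewrite jC_b1. Qed.
Lemma ia1c : iC a1 = jC b0. Proof. by rewrite jC_b0. Qed.

Lemma ijc a b : iC a = jC b -> (a = a0 /\ b = b1) \/ (a = a1 /\ b = b0).
Proof.
case: (bcases b) => [->|->|kb].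
- by rewrite jC_b0 => [[->]]; right.
- by rewrite jC_b1 => [[->]]; left.
- by rewrite jC_keep.
Qed.

Lemma covc c : (exists a, c = iC a) \/ (exists b, c = jC b).
Proof.
case: c => [a|s]; first by left; exists a.
right; exists (val s); case: s => b kb /=; by rewrite jC_keep.
Qed.

Lemma eCEc c c' : eCc c c' <->
     (exists a a', [/\ c = iC a, c' = iC a' & eA a a']) \/
     (exists x x', [/\ c = jC x, c' = jC x' & eB x x']).
Proof.
split.
- case/orP => [/existsP [a /existsP [a' /and3P [/eqP -> /eqP -> h]]]|
               /existsP [a /existsP [a' /and3P [/eqP -> /eqP -> h]]]].
    by left; exists a, a'.
  by right; exists a, a'.
- case => [[a [a' [-> -> h]]]|[a [a' [-> -> h]]]]; apply/orP.
    by left; apply/existsP; exists a; apply/existsP; exists a'; rewrite !eqxx h.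
  by right; apply/existsP; exists a; apply/existsP; exists a'; rewrite !eqxx h.
Qed.

Lemma eCEc' c c' : eCc c c' <->
     (exists x x', [/\ c = jC x, c' = jC x' & eB x x']) \/
     (exists a a', [/\ c = iC a, c' = iC a' & eA a a']).
Proof.
split => [/eCEc h|h]; first by case: h; auto.
by apply/eCEc; case: h; auto.
Qed.

Lemma fic a : fC (iC a) = a. Proof. by []. Qed.
Lemma fjc b : b != b0 -> fC (jC b) = a0.
Proof.
move=> h; case: (bcases b) => [e|->|kb]; first by rewrite e eqxx in h.
- by rewrite jC_b1.
- by rewrite jC_keep.
Qed.
Lemma gic a : a != a0 -> gC (iC a) = b0.
Proof. by move=> h /=; rewrite (negbTE h). Qed.

Lemma ijc' b a : jC b = iC a -> (b = b0 /\ a = a1) \/ (b = b1 /\ a = a0).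
Proof. by move/esym/ijc => [[-> ->]|[-> ->]]; [right|left]. Qed.

Lemma covc' c : (exists b, c = jC b) \/ (exists a, c = iC a).
Proof. by case: (covc c); auto. Qed.

Lemma conc_tree : is_tree eCc.
Proof.
exact: (tree_C tA tB NA NB iIc jIc ia0c ia1c ijc covc eCEc fic fjc).
Qed.

Lemma conc_mor1 infP P : fam_mor infP P eCc eA fC.
Proof.
exact: (glue_mor tA tB NA NB iIc jIc ia0c ia1c ijc covc eCEc fic fjc).
Qed.

Lemma conc_mor2 infP P : fam_mor infP P eCc eB gC.
Proof.
exact: (glue_mor tB tA NB NA jIc iIc (esym ia1c) (esym ia0c) ijc' covc' eCEc' gjK gic).
Qed.

Lemma conc_ord c : (exists a, ord eCc c = ord eA a) \/ (exists b, ord eCc c = ord eB b).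
Proof.
have oi := ord_i tA tB NA NB iIc jIc ia0c ia1c ijc covc eCEc fic fjc.
have oj := ord_i tB tA NB NA jIc iIc (esym ia1c) (esym ia0c) ijc' covc' eCEc' gjK gic.
case: (covc c) => [[a ->]|[b ->]].
  case: (eqVneq a a0) => [->|h]; last by left; exists a; apply: oi.
  by right; exists b1; rewrite ia0c; apply: oj; apply: b10.
case: (eqVneq b b0) => [->|h]; last by right; exists b; apply: oj.
by left; exists a1; rewrite -ia1c; apply: oi; apply: a10.
Qed.

End Concrete.

Lemma mor_id infP (P : nat -> Prop) (T : finType) (e : rel T) : is_tree e -> fam_mor infP P e e id.
Proof.
move=> _.
have cw : forall a, coh_witness e e id a a.
  move=> a; split => //; exists (fun S => S); split.
  - by move=> ? ? _ _.
  - exact: imset_id.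
  - by move=> Ai _; apply/subsetP => x; rewrite inE.
have ww : forall a, wcoh_witness e e id a a.
  move=> a; case: (cw a) => h1 h2 [p [pI pE ps]]; split => //.
  by exists p; split => // Ai Ain; rewrite -pE; apply: imset_f.
split; [split|split].
- by move=> a; exists a.
- move=> a b; split => [h|[b1 [b2 [<- <- h]]] //]; by exists a, b.
- by move=> a c c'; rewrite !inE => /eqP -> /eqP ->; apply: connect0.
case: infP; last by move=> a h; split => //; exists a.
split; first by move=> a h _; split => //; exists a.
by move=> a h nP; exists a; split.
Qed.

Lemma mor_const infP (P : nat -> Prop) (TC TA : finType) (eC : rel TC) (eA : rel TA) (a : TA) :
  is_tree eC -> is_tree eA -> #|TA| <= 1 -> fam_mor infP P eC eA (fun _ => a).
Proof.
move=> tC [[rA _] _ _ _] /fintype_le1P h.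
have [[rC _] /card_gt0P [c0 _] cC _] := tC.
have o0 : forall y, ord eA y = 0.
  move=> y; apply/eqP; rewrite cards_eq0; apply/eqP/setP => z.
  by rewrite !inE (h a z) (h a y) eqxx andbF.
split; [split|split].
- by move=> y; exists c0; rewrite (h a y).
- move=> y1 y2; split => [_|[c1 [c2 [<- <- _]]]]; last exact: rA.
  by exists c0, c0; rewrite (h a y1) (h a y2) rC.
- move=> y c c' _ _; have := cC c c' (in_setT _) (in_setT _).
  apply: (@connect_hom _ _ _ _ id) => x z /and3P [_ _ exz].
  by rewrite /induced !inE -(h a y) eqxx exz.
case: infP => [|y]; last by rewrite o0.
by split => y; rewrite o0.
Qed.

Theorem mainTheorem4 (infP : bool) (P : nat -> Prop)
    (HP : forall n, P n -> 3 <= n)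
    (TA : finType) (eA : rel TA) (TB : finType) (eB : rel TB) :
  fam_obj infP P eA -> fam_obj infP P eB ->
  exists (TC : finType) (eC : rel TC) (f1 : TC -> TA) (f2 : TC -> TB),
    [/\ fam_obj infP P eC, fam_mor infP P eC eA f1 & fam_mor infP P eC eB f2].
Proof.
move=> [tA oA] [tB oB].
case: (leqP #|TA| 1) => hA.
  have [a _] : exists a : TA, a \in TA by apply/card_gt0P; case: tA.
  exists TB, eB, (fun _ => a), id; split => //; [exact: mor_const | exact: mor_id].
case: (leqP #|TB| 1) => hB.
  have [b _] : exists b : TB, b \in TB by apply/card_gt0P; case: tB.
  exists TA, eA, id, (fun _ => b); split => //; [exact: mor_id | exact: mor_const].
have [a0 [a1 NA]] := leaf_exists tA hA.
have [b0 [b1 NB]] := leaf_exists tB hB.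
exists (@TCc TA TB b0 b1), (@eCc TA TB eA eB a0 a1 b0 b1), (@fC TA TB a0 b0 b1), (@gC TA TB a0 b0 b1).
split; [split| exact: conc_mor1 | exact: conc_mor2].
  exact: conc_tree.
move=> {HP}; case: infP oA oB => oA oB c;
  (case: (conc_ord tA tB NA NB c) => [[a ->]|[b ->]]; [exact: oA | exact: oB]).
Qed.
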